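(* Consider the infinite-dimensional Poisson manifold with coordinates $p_1,p_2,p_3,\dots,u_1,u_2,u_3,\dots$ and Poisson bracket satisfying $\{p_i,p_k\}=0$, $\{u_i,u_k\}=0$, $\{u_i,p_k\}=J_{ki}$ ($i,k\ge1$), where $J_{ki}$ are functions of the coordinates. Let $p^*_n=P_n(-p_1,-\tfrac12p_2,-\tfrac13p_3,\dots)$ for $n\ge1$, where the Schur polynomials $P_n$ are defined by $\exp\big(\sum_{n\ge1}z^nt_n\big)=\sum_{m\ge0}z^mP_m(t_1,t_2,\dots)$, and let $J^*_{ki}:=\{u_i,p^*_k\}$ denote the Poisson tensor in the coordinates $(p^*,u)$. Let $I(\Gamma_\infty)$ be the ideal generated by $h^*_n=p^*_n-u_{n-1}$, $n=2,3,4,\dots$ (the family of ideals of the family of normal rational curves of the big cell). If $$\big(J^*_{i,k-1}-J^*_{k,i-1}\big)\big|_{\Gamma_\infty}=0\qquad\text{for all } i,k=2,3,4,\dots,$$ i.e. these functions lie in $I(\Gamma_\infty)$, then $I(\Gamma_\infty)$ is a Poisson ideal: $\{I(\Gamma_\infty),I(\Gamma_\infty)\}\subset I(\Gamma_\infty)$.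
   Context: Here $p_1,p_2,\dots$ play the role of the elements $p_i=z^i+\sum_{k\ge1}H^i_kz^{-k}$ of a point of the big cell closed under multiplication, $u_k=H^1_k$, and the family of normal rational curves is given by the relations $p_2=p_1^2-2u_1$, $p_3=p_1^3-3u_1p_1-3u_2$, $\dots$, which are equivalent to $p^*_n=u_{n-1}$, $n\ge2$; $\Gamma_\infty$ denotes this family (zero set of the ideal). A Poisson ideal is an ideal closed under the Poisson bracket. *)

(* Defs.v *)
From HB Require Import structures.
From mathcomp Require Import all_boot all_order all_algebra.
Set Implicit Arguments. Unset Strict Implicit. Unset Printing Implicit Defensive.
Import Order.TTheory GRing.Theory Num.Theory.
Local Open Scope ring_scope.

Definition poisson_bracket (A : comAlgType rat) (br : A -> A -> A) : Prop :=
  [/\ (forall (a : rat) (x y z : A), br (a *: x + y) z = a *: br x z + br y z),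
      (forall x y : A, br x y = - br y x),
      (forall x y z : A, br x (y * z) = br x y * z + y * br x z) &
      (forall x y z : A, br x (br y z) + br y (br z x) + br z (br x y) = 0)].

(* Schur polynomials: P_m(t_1,t_2,...) is the coefficient of z^m in
   exp(sum_{n>=1} z^n t_n).  Since the exponent has no constant term, only
   t_1..t_m and the terms of the exponential series up to order m contribute. *)
Definition schur (A : comAlgType rat) (m : nat) (t : nat -> A) : A :=
  let T : {poly A} := \sum_(1 <= n < m.+1) t n *: 'X^n in
  \sum_(k < m.+1) ((k`!)%:R : rat)^-1 *: (T ^+ k)`_m.

Definition pstar (A : comAlgType rat) (p : nat -> A) (n : nat) : A :=
  schur n (fun j => - ((j%:R : rat)^-1 *: p j)).

Definition in_ideal_gen (A : comAlgType rat) (g : nat -> A) (P : pred nat)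
    (x : A) : Prop :=
  exists s : seq (A * nat),
    all (fun q => P q.2) s /\ x = \sum_(q <- s) q.1 * g q.2.

Definition I_Gamma (A : comAlgType rat) (p u : nat -> A) : A -> Prop :=
  in_ideal_gen (fun n => pstar p n - u n.-1) (fun n => 1 < n)%N.

(* Main.v *)
Require Import Defs.
From mathcomp Require Import all_boot all_order all_algebra.
Import GRing.Theory.
Local Open Scope ring_scope.

Section Aux.
Variable A : comAlgType rat.

Lemma pstar_closed (Z : A -> Prop) (p : nat -> A) :
  Z 1 -> (forall (a : rat) x y, Z x -> Z y -> Z (a *: x + y)) ->
  (forall x y, Z x -> Z y -> Z (x * y)) ->
  (forall j, (1 <= j)%N -> Z (p j)) -> forall n, Z (pstar p n).
Proof.
move=> Z1 Zl Zm Zp n.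
have Z0 : Z 0 by rewrite -(addNr 1) -scaleN1r; apply: (Zl).
have Za : forall x y, Z x -> Z y -> Z (x + y).
  by move=> x y hx hy; rewrite -[x]scale1r; apply: (Zl).
have Zs : forall (a : rat) x, Z x -> Z (a *: x).
  by move=> a x hx; rewrite -[_ *: x]addr0; apply: (Zl).
have Zn : forall b : bool, Z (b%:R).
  by case; rewrite ?mulr1n ?mulr0n.
rewrite /pstar /schur.
set T := (\sum_(1 <= k < n.+1) _).
have ZT : forall i, Z (T`_i).
  move=> i; rewrite /T coef_sum big_nat_cond; apply: big_ind => //.
  move=> k /andP [/andP [hk _] _]; rewrite coefZ coefXn; apply: (Zm); last exact: (Zn).
  rewrite -scaleNr -[_ *: p k]addr0; apply: (Zl) => //.
  by apply: (Zp).
have ZTk : forall k i, Z ((T ^+ k)`_i).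
  elim=> [|k0 IH] i0; first by rewrite expr0 coef1; apply: (Zn).
  rewrite exprS coefM; apply: big_ind => //.
  by move=> j _; apply: (Zm).
apply: big_ind => // k _; exact: (Zs).
Qed.

End Aux.

Theorem proposition5 (A : comAlgType rat) (br : A -> A -> A) (p u : nat -> A) :
  poisson_bracket br ->
  (forall i k : nat, (1 <= i)%N -> (1 <= k)%N -> br (p i) (p k) = 0) ->
  (forall i k : nat, (1 <= i)%N -> (1 <= k)%N -> br (u i) (u k) = 0) ->
  (* J^*_{ki} := {u_i, p^*_k};  J^*_{i,k-1} - J^*_{k,i-1} in I(Gamma_infty) *)
  (forall i k : nat, (2 <= i)%N -> (2 <= k)%N ->
     I_Gamma p u (br (u k.-1) (pstar p i) - br (u i.-1) (pstar p k))) ->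
  forall x y : A, I_Gamma p u x -> I_Gamma p u y -> I_Gamma p u (br x y).
Proof.
move=> [lin anti leib _] hpp huu hJ.
have addL : forall x y z, br (x + y) z = br x z + br y z.
  by move=> x y z; have := lin 1 x y z; rewrite !scale1r.
have br0 : forall z, br 0 z = 0.
  move=> z; have h := addL 0 0 z; rewrite addr0 in h.
  by apply/(addrI (br 0 z)); rewrite addr0 -h.
have negL : forall x z, br (- x) z = - br x z.
  by move=> x z; have := lin (-1) x 0 z; rewrite !scaleN1r !addr0 br0 addr0.
have leibL : forall x y z, br (x * y) z = br x z * y + x * br y z.
  move=> x y z; rewrite anti leib (anti z x) (anti z y).
  by rewrite mulNr mulrN opprD !opprK.
have br1 : forall z, br 1 z = 0.
  move=> z; have h := leibL 1 1 z; rewrite !mulr1 !mul1r in h.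
  by apply/(addrI (br 1 z)); rewrite addr0 -h.
have Zcl : forall z, (forall j, (1 <= j)%N -> br (p j) z = 0) ->
    forall n, br (pstar p n) z = 0.
  move=> z hz; apply: (@pstar_closed A (fun x => br x z = 0)) => //.
  - by move=> a x y hx hy; rewrite lin hx hy scaler0 addr0.
  - by move=> x y hx hy; rewrite leibL hx hy mul0r mulr0 addr0.
have pp : forall n m, br (pstar p n) (pstar p m) = 0.
  move=> n m; apply: (Zcl) => j hj; rewrite anti; apply/eqP; rewrite oppr_eq0; apply/eqP.
  by apply: (Zcl) => i hi; apply: (hpp).
set g := fun n => pstar p n - u n.-1.
have I0 : I_Gamma p u 0 by exists [::]; rewrite big_nil.
have IA : forall x y, I_Gamma p u x -> I_Gamma p u y -> I_Gamma p u (x + y).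
  move=> x y [s [hs ->]] [t [ht ->]]; exists (s ++ t).
  by rewrite all_cat hs ht big_cat.
have IM : forall a x, I_Gamma p u x -> I_Gamma p u (a * x).
  move=> a x [s [hs ->]]; exists [seq (a * q.1, q.2) | q <- s]; split.
    by rewrite all_map.
  by rewrite big_map mulr_sumr; apply: eq_bigr => q _; rewrite mulrA.
have IN : forall x, I_Gamma p u x -> I_Gamma p u (- x).
  by move=> x hx; rewrite -mulN1r; apply: (IM).
have Ig : forall n, (1 < n)%N -> I_Gamma p u (g n).
  by move=> n hn; exists [:: (1, n)]; rewrite /= hn big_seq1 mul1r.
have gg : forall n m, (1 < n)%N -> (1 < m)%N -> I_Gamma p u (br (g n) (g m)).
  move=> n m hn hm; rewrite /g.
  have addR : forall x y z, br x (y + z) = br x y + br x z.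
    by move=> x y z; rewrite anti addL opprD -!anti.
  have negR : forall x y, br x (- y) = - br x y.
    by move=> x y; rewrite anti negL opprK -anti.
  rewrite addL negL !addR !negR pp huu; try by case: n hn; try case: m hm.
  rewrite (anti (pstar p n)) opprK subr0 add0r.
  by apply: (hJ).
have gI : forall n y, (1 < n)%N -> I_Gamma p u y -> I_Gamma p u (br (g n) y).
  move=> n y hn [t [ht ->]]; elim: t ht => [|r t IH] /=.
    by move=> _; rewrite big_nil anti br0 oppr0.
  move=> /andP [hr ht]; rewrite big_cons anti addL opprD.
  apply: (IA); last by rewrite -anti; apply: (IH).
  rewrite leibL opprD; apply: (IA); apply: (IN).
    by apply: (IM); apply: (Ig).
  apply: (IM); rewrite anti; apply: (IN); exact: (gg).
move=> x y [s [hs ->]] hy; elim: s hs => [|r s IH] /=.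
  by move=> _; rewrite big_nil br0.
move=> /andP [hr hs]; rewrite big_cons addL; apply: (IA); last exact: (IH).
rewrite leibL; apply: (IA); last by apply: (IM); apply: (gI).
apply: (IM); exact: (Ig).
Qed.
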